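(* Let $C$ be a commutative ring, $A$ a $C$-algebra and $n\ge2$. Then $\mathrm{Obst}_{n-1}(A)\supseteq\mathrm{Obst}_n(A)$.
   Context: For $m\ge1$ and each $a\in A$ let $\xi_{1,a},\dots,\xi_{m,a}$ be new commuting central indeterminates, $A[\xi_{m,A}]$ the polynomial algebra over $A$ in all of them, and $I_{m,A}$ the ideal of $A[\xi_{m,A}]$ generated by $a^m+\xi_{1,a}a^{m-1}+\cdots+\xi_{m,a}$, $a\in A$. Define $\mathrm{Obst}_m(A)=A\cap I_{m,A}$. *)

(* Defs.v *)
From HB Require Import structures.
From mathcomp Require Import all_boot all_order all_algebra.
From mathcomp Require Import finmap.
From mathcomp.multinomials Require Import monalg.
Set Implicit Arguments.
Unset Strict Implicit.
Unset Printing Implicit Defensive.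
Import GRing.Theory.
Local Open Scope ring_scope.

Definition in_ideal (R : nzRingType) (S : R -> Prop) (x : R) : Prop :=
  exists (n : nat) (p s q : 'I_n -> R),
    (forall k, S (s k)) /\ x = \sum_(k < n) p k * s k * q k.

(* The polynomial algebra A[xi_{m,A}] over A in commuting central
   indeterminates xi_{i,a}, (i,a) in 'I_m * A  (index i : 'I_m stands for the
   paper's index i+1 in {1,..,m}). *)
Definition polyXi (m : nat) (A : nzRingType) :=
  {malg A[{cmonom ('I_m * A)%type}]}.

Definition xi (m : nat) (A : nzRingType) (i : 'I_m) (a : A) : polyXi m A :=
  @mkmalgU _ A (ucm (i, a)) 1.

Definition obst_gen (m : nat) (A : nzRingType) (a : A) : polyXi m A :=
  (a ^+ m)%:MP + \sum_(i < m) xi i a * (a ^+ (m - i.+1))%:MP.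

(* Obst_m(A) = A \cap I_{m,A}, with A embedded as constants *)
Definition Obst (m : nat) (A : nzRingType) (x : A) : Prop :=
  in_ideal (fun g : polyXi m A => exists a : A, g = obst_gen m a) (x%:MP).

(* Main.v *)
Require Import Defs.
From HB Require Import structures.
From mathcomp Require Import all_boot all_order all_algebra.
From mathcomp Require Import finmap.
From mathcomp.multinomials Require Import monalg.
Set Implicit Arguments.
Unset Strict Implicit.
Unset Printing Implicit Defensive.
Import GRing.Theory.
Local Open Scope ring_scope.

Section Red.
Variables (A : nzRingType) (n : nat).
Local Notation K := (cmonom ('I_n.+2 * A)%type).
Local Notation K' := (cmonom ('I_n.+1 * A)%type).

Definition good (m : K) : bool :=
  all (fun k : ('I_n.+2 * A)%type => k.1 != ord_max) (finsupp m).

Definition red (m : K) : K' :=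
  [cmonom m (widen_ord (leqnSn _) k.1, k.2) | k in
     [fset ((inord (val k.1) : 'I_n.+1), k.2) | k in finsupp m]%fset]%M.

Lemma redE (m : K) k : red m k = m (widen_ord (leqnSn _) k.1, k.2).
Proof.
rewrite /red cmE /= fsfun_fun; case: ifP => // notin.
apply/eqP; apply: contraFT notin => H.
apply/imfsetP; exists (widen_ord (leqnSn _) k.1, k.2) => /=.
  by rewrite mem_finsupp eq_sym.
case: k {H} => i a /=; congr pair; apply/val_inj; rewrite /= inordK //.
Qed.

Lemma goodP (m : K) : reflect (forall a, m (ord_max, a) = 0%N) (good m).
Proof.
apply: (iffP allP) => [H a | H k].
  case E: (m (ord_max, a) == 0%N); first by apply/eqP.
  have := H (ord_max, a).
  by rewrite mem_finsupp E eqxx => /(_ isT).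
rewrite mem_finsupp /= => nz; apply/eqP => e; move: nz.
by case: k e => i a /= ->; rewrite H.
Qed.
Lemma malgMUU (c1 c2 : A) (k1 k2 : K') :
  << c1 *g k1 >> * << c2 *g k2 >> = << c1 * c2 *g mmul k1 k2 >>.
Proof. exact: fgmulUU. Qed.

Definition hmon (m : K) : polyXi n.+1 A := if good m then << red m >> else 0.

Lemma good_mul (m1 m2 : K) : good (mmul m1 m2) = good m1 && good m2.
Proof.
case: (goodP m1) => g1; case: (goodP m2) => g2; apply/goodP => /=.
- by move=> a; rewrite mulcmE g1 g2.
- by move=> H; apply: g2 => a; have := H a; rewrite mulcmE => /eqP; rewrite addn_eq0 => /andP[_ /eqP].
- by move=> H; apply: g1 => a; have := H a; rewrite mulcmE => /eqP; rewrite addn_eq0 => /andP[/eqP].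
- by move=> H; apply: g1 => a; have := H a; rewrite mulcmE => /eqP; rewrite addn_eq0 => /andP[/eqP].
Qed.

Lemma red_mul (m1 m2 : K) : red (mmul m1 m2) = mmul (red m1) (red m2).
Proof. by apply/eqP/cmP => k; rewrite !(mulcmE, redE). Qed.

Lemma good1 : good (mone : K).
Proof. by apply/goodP => a; rewrite onecmE. Qed.

Lemma red1 : red (mone : K) = mone.
Proof. by apply/eqP/cmP => k; rewrite !(onecmE, redE). Qed.

Lemma hmon_mm : mmorphism hmon.
Proof.
split.
  move=> m1 m2; rewrite /hmon good_mul red_mul.
  case: (good m1); case: (good m2); rewrite ?mulr0 ?mul0r //.
  by rewrite malgMUU mulr1.
by rewrite /hmon good1 red1.
Qed.

HB.instance Definition _ := isMultiplicative.Build K (polyXi n.+1 A) hmon hmon_mm.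

Lemma hmon_comm (g : polyXi n.+2 A) (m m' : K) : GRing.comm (g@_m)%:MP (hmon m').
Proof.
rewrite /hmon; case: (good m'); last by rewrite /GRing.comm mulr0 mul0r.
rewrite /GRing.comm.
have e1 := malgMUU (g@_m) 1 mone (red m').
have e2 := malgMUU 1 (g@_m) (red m') mone.
rewrite mulm1 mul1m mul1r mulr1 in e1 e2.
exact: (etrans e1 (esym e2)).
Qed.

Definition Phi0 (p : polyXi n.+2 A) : polyXi n.+1 A := mmap (@malgC _ A) hmon p.
Fact Phi_key : unit. Proof. by []. Qed.
Definition Phi := locked_with Phi_key Phi0.
Lemma PhiE : Phi = Phi0. Proof. by rewrite /Phi unlock. Qed.

Lemma PhiM : multiplicative Phi.
Proof. rewrite PhiE; exact: (commr_mmap_is_multiplicative hmon_comm). Qed.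

Lemma PhiD : {morph Phi : x y / x + y}.
Proof. by move=> x y; rewrite PhiE /Phi0 raddfD. Qed.

Lemma Phi_sum (N : nat) (F : 'I_N -> polyXi n.+2 A) :
  Phi (\sum_(k < N) F k) = \sum_(k < N) Phi (F k).
Proof. by rewrite PhiE /Phi0 raddf_sum. Qed.

Lemma PhiMul x y : Phi (x * y) = Phi x * Phi y.
Proof. exact: PhiM.1. Qed.

Lemma PhiC c : Phi c%:MP = c%:MP.
Proof. by rewrite PhiE /Phi0 mmapC. Qed.

Lemma Phi_xi_max a : Phi (xi ord_max a) = 0.
Proof.
rewrite PhiE /Phi0 /xi mmapU /hmon; case: (goodP (ucm (ord_max, a))) => [H|_].
  by have := H a; rewrite ucmE eqxx.
by rewrite mulr0.
Qed.

Lemma Phi_xi_widen (j : 'I_n.+1) a :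
  Phi (xi (widen_ord (leqnSn _) j) a) = xi j a.
Proof.
rewrite PhiE /Phi0 /xi mmapU /hmon; case: (goodP (ucm (widen_ord (leqnSn _) j, a))) => [_|H].
  rewrite /= mpolyC1E mul1r.
  suff -> : red (ucm (widen_ord (leqnSn _) j, a)) = ucm (j, a) by [].
  apply/eqP/cmP => k; rewrite redE !ucmE.
  case: k => i b /=; rewrite !xpair_eqE; congr (_ && _).
exfalso; apply: H => b; rewrite ucmE xpair_eqE; case: eqP => //= /(congr1 val) /= e.
by move: (ltn_ord j); rewrite e ltnn.
Qed.

Lemma comm_xi (c : A) (j : 'I_n.+1) a : c%:MP * xi j a = xi j a * c%:MP.
Proof.
have e1 := malgMUU c 1 mone (ucm (j, a)).
have e2 := malgMUU 1 c (ucm (j, a)) mone.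
rewrite mulm1 mul1m mul1r mulr1 in e1 e2.
exact: (etrans e1 (esym e2)).
Qed.

Lemma Phi_gen a (X : 'I_n.+2 -> polyXi n.+2 A) (Y : 'I_n.+1 -> polyXi n.+1 A) :
  Phi (X ord_max) = 0 ->
  (forall j, Phi (X (widen_ord (leqnSn _) j)) = Y j) ->
  (forall c j, c%:MP * Y j = Y j * c%:MP) ->
  Phi ((a ^+ n.+2)%:MP + \sum_(i < n.+2) X i * (a ^+ (n.+2 - i.+1))%:MP) =
  a%:MP * ((a ^+ n.+1)%:MP + \sum_(i < n.+1) Y i * (a ^+ (n.+1 - i.+1))%:MP).
Proof.
move=> HX HY HC.
erewrite PhiD. erewrite PhiC. erewrite Phi_sum. rewrite big_ord_recr /=.
erewrite (PhiMul (X ord_max)). erewrite HX. erewrite mul0r. rewrite addr0.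
erewrite mulrDr. erewrite <- mpolyCM. erewrite <- exprS. congr (_ + _).
erewrite mulr_sumr; apply: eq_bigr => i _.
erewrite PhiMul. erewrite PhiC. erewrite HY. erewrite mulrA. erewrite HC.
erewrite <- mulrA. erewrite <- mpolyCM. erewrite <- exprS.
by rewrite /= subSn.
Qed.

Lemma Phi_obst a : Phi (obst_gen n.+2 a) = a%:MP * obst_gen n.+1 a.
Proof.
exact: (@Phi_gen a (fun i => xi i a) (fun i => xi i a) (Phi_xi_max a)
  (fun j => Phi_xi_widen j a) (fun c j => comm_xi c j a)).
Qed.
End Red.

Theorem lemma2p24 (C : comNzRingType) (A : algType C) (n : nat) :
  (2 <= n)%N -> forall x : A, Obst n x -> Obst n.-1 x.
Proof.
case: n => [|[|n]] // _ x [N [p [s [q [Hs Hx]]]]].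
have Ha : forall k, {a : A | s k == obst_gen n.+2 a}.
  by move=> k; apply: sigW; case: (Hs k) => a ->; exists a.
exists N, (fun k => Phi (p k) * (sval (Ha k))%:MP),
  (fun k => obst_gen n.+1 (sval (Ha k))), (fun k => Phi (q k)).
split; first by move=> k; exists (sval (Ha k)).
apply: etrans (esym (PhiC n x)) _.
erewrite Hx. erewrite Phi_sum. apply: eq_bigr => k _.
erewrite PhiMul. erewrite PhiMul. case: (Ha k) => a /= /eqP ->.
erewrite Phi_obst. erewrite mulrA. reflexivity.
Qed.
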